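(* There is a constant $c$ such that for every basic Boolean formula $\phi$ whose variables are among $v_1,\dots,v_n$ there exists an instruction sequence $X\in\mathrm{IS}^{na}_{br}$ in which the basic instruction $\mathrm{out}.\mathrm{set}{:}F$ does not occur (in any plain, positive test or negative test instruction) such that $X$ computes the $n$-ary Boolean function induced by $\phi$ and $|X|\le c\cdot(\mathrm{size}(\phi)+1)$.
   Context: $\mathbb B=\{T,F\}$. A basic Boolean formula is a propositional formula built from variables $v_1,v_2,\dots$ using only the connectives $\neg,\vee,\wedge$; its size is the number of occurrences of variables and connectives. The $n$-ary Boolean function induced by $\phi$ (variables among $v_1,\dots,v_n$) maps $(b_1,\dots,b_n)$ to $T$ iff $\phi$ is true under $v_j\mapsto b_j$. A primitive instruction is one of: a plain basic instruction $a$, a positive test instruction $+a$, a negative test instruction $-a$ (for a basic instruction $a$), a forward jump instruction $\#l$ ($l\in\mathbb N$), or the termination instruction $!$. An instruction sequence is a finite nonempty sequence $X=u_1;\dots;u_k$ of primitive instructions; its length is $|X|=k$. Basic instructions have the form $f.m$ where the focus $f$ is one of $\mathrm{in}{:}i$, $\mathrm{aux}{:}i$ ($i\ge 1$) or $\mathrm{out}$, each naming a Boolean register, and the method $m$ is one of $\mathrm{set}{:}T$, $\mathrm{set}{:}F$, $\mathrm{get}$. Executing $f.\mathrm{set}{:}b$ sets register $f$ to $b$ and yields reply $b$; executing $f.\mathrm{get}$ leaves the register unchanged and yields its content as reply. Execution of $X=u_1;\dots;u_k$: a counter starts at $1$. If the counter exceeds $k$, execution deadlocks. At position $i$: if $u_i=!$,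 execution terminates; if $u_i=\#l$, execution deadlocks if $l=0$ and otherwise the counter becomes $i+l$; if $u_i$ is $a$, $+a$ or $-a$, the basic instruction $a$ is executed yielding reply $r$, and the counter becomes $i+1$ for $u_i=a$; for $u_i=+a$ it becomes $i+1$ if $r=T$ and $i+2$ if $r=F$; for $u_i=-a$ it becomes $i+1$ if $r=F$ and $i+2$ if $r=T$. $\mathrm{IS}_{br}$ is the set of instruction sequences in which every basic instruction occurring belongs to $\{f.\mathrm{get}: f=\mathrm{in}{:}i \text{ or } f=\mathrm{aux}{:}i\}\cup\{f.\mathrm{set}{:}b: f=\mathrm{aux}{:}i \text{ or } f=\mathrm{out},\ b\in\mathbb B\}$. $\mathrm{IS}^{na}_{br}\subseteq \mathrm{IS}_{br}$ is the set of those in which every basic instruction belongs to $\{\mathrm{in}{:}i.\mathrm{get}: i\ge1\}\cup\{\mathrm{out}.\mathrm{set}{:}T,\mathrm{out}.\mathrm{set}{:}F\}$. $X\in\mathrm{IS}_{br}$ computes $f:\mathbb B^n\to\mathbb B$ if for every $(b_1,\dots,b_n)\in\mathbb B^n$: when $X$ is executed with register $\mathrm{in}{:}j$ initialised to $b_j$ ($j\le n$) and all registers $\mathrm{aux}{:}i$ and $\mathrm{out}$ initialised to $F$, execution terminates (does not deadlock) without ever executing a basic instruction with focus $\mathrm{in}{:}j$ for $j>n$, and at termination register $\mathrm{out}$ contains $f(b_1,\dots,b_n)$. *)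

(* Defs.v *)
(* Boolean values: true = T, false = F. *)
From Stdlib Require Import Arith List Bool.
Import ListNotations.

Inductive formula : Type :=
| FVar : nat -> formula            (* FVar i is v_i, i >= 1 *)
| FNeg : formula -> formula
| FOr  : formula -> formula -> formula
| FAnd : formula -> formula -> formula.

Fixpoint fsize (p : formula) : nat :=
  match p with
  | FVar _ => 1
  | FNeg q => S (fsize q)
  | FOr q r => S (fsize q + fsize r)
  | FAnd q r => S (fsize q + fsize r)
  end.

Fixpoint vars_among (n : nat) (p : formula) : Prop :=
  match p with
  | FVar i => 1 <= i /\ i <= n
  | FNeg q => vars_among n q
  | FOr q r => vars_among n q /\ vars_among n r
  | FAnd q r => vars_among n q /\ vars_among n r
  end.

Fixpoint feval (v : nat -> bool) (p : formula) : bool :=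
  match p with
  | FVar i => v i
  | FNeg q => negb (feval v q)
  | FOr q r => feval v q || feval v r
  | FAnd q r => feval v q && feval v r
  end.

(* the n-ary Boolean function induced by p, on inputs (b_1,...,b_n) given as a
   list of length n: v_j |-> b_j = nth (j-1) bs *)
Definition induced (p : formula) (bs : list bool) : bool :=
  feval (fun j => nth (j - 1) bs false) p.

Inductive focus : Type := FIn (i : nat) | FAux (i : nat) | FOut.
Inductive method : Type := MSet (b : bool) | MGet.
Record basic : Type := BI { bfocus : focus; bmethod : method }.

Inductive instr : Type :=
| IPlain : basic -> instr
| IPos   : basic -> instr
| INeg   : basic -> instr
| IJump  : nat -> instr
| ITerm  : instr.

Definition state := focus -> bool.

Definition focus_eqb (f g : focus) : bool :=
  match f, g with
  | FIn i, FIn j => Nat.eqb i j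
  | FAux i, FAux j => Nat.eqb i j
  | FOut, FOut => true
  | _, _ => false
  end.

Definition exec_basic (a : basic) (s : state) : state * bool :=
  match bmethod a with
  | MSet b => (fun g => if focus_eqb g (bfocus a) then b else s g, b)
  | MGet => (s, s (bfocus a))
  end.

Inductive outcome : Type :=
| Terminated : state -> outcome
| Deadlock : outcome
| Violation : outcome.   (* a basic instruction with focus in:j, j > n, was executed *)

Definition forbidden (n : nat) (a : basic) : bool :=
  match bfocus a with FIn j => Nat.ltb n j | _ => false end.

(* run X with input arity n, fuel, counter pc, state s;
   None = out of fuel *)
Fixpoint run (X : list instr) (n fuel pc : nat) (s : state) : option outcome :=
  match fuel with
  | 0 => None
  | S f =>
    if (pc =? 0) || (length X <? pc) then Some Deadlock else
    match nth (pc - 1) X ITerm with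
    | ITerm => Some (Terminated s)
    | IJump 0 => Some Deadlock
    | IJump l => run X n f (pc + l) s
    | IPlain a => if forbidden n a then Some Violation else
        let (s', _) := exec_basic a s in run X n f (pc + 1) s'
    | IPos a => if forbidden n a then Some Violation else
        let (s', r) := exec_basic a s in
        run X n f (if r then pc + 1 else pc + 2) s'
    | INeg a => if forbidden n a then Some Violation else
        let (s', r) := exec_basic a s in
        run X n f (if r then pc + 2 else pc + 1) s'
    end
  end.

Definition init_state (bs : list bool) : state :=
  fun g => match g with
           | FIn j => if (1 <=? j) && (j <=? length bs) then nth (j - 1) bs false else false
           | _ => false
           end.

Definition instr_basics (u : instr) : list basic :=
  match u with
  | IPlain a | IPos a | INeg a => [a]
  | _ => []
  end.

Definition br_basic (a : basic) : Prop :=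
  match bfocus a, bmethod a with
  | FIn i, MGet => 1 <= i
  | FAux i, _ => 1 <= i
  | FOut, MSet _ => True
  | _, _ => False
  end.

Definition na_basic (a : basic) : Prop :=
  match bfocus a, bmethod a with
  | FIn i, MGet => 1 <= i
  | FOut, MSet _ => True
  | _, _ => False
  end.

Definition is_seq (X : list instr) : Prop := X <> [].

Definition IS_br (X : list instr) : Prop :=
  is_seq X /\ forall u a, In u X -> In a (instr_basics u) -> br_basic a.

Definition IS_na_br (X : list instr) : Prop :=
  is_seq X /\ forall u a, In u X -> In a (instr_basics u) -> na_basic a.

Definition no_out_setF (X : list instr) : Prop :=
  forall u, In u X -> ~ In (BI FOut (MSet false)) (instr_basics u).

Definition computes (X : list instr) (n : nat) (f : list bool -> bool) : Prop :=
  forall bs : list bool, length bs = n ->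
    exists fuel s, run X n fuel 1 (init_state bs) = Some (Terminated s)
                   /\ s FOut = f bs.

(* Main.v *)
Require Import Defs.
From Stdlib Require Import Arith List Lia Bool.
Import ListNotations.

Fixpoint comp (p : formula) : list instr :=
  match p with
  | FVar i => [IPos (BI (FIn i) MGet)]
  | FNeg q => comp q ++ [IJump 3; IJump 1]
  | FAnd q r => comp q ++ [IJump 2; IJump (length (comp r) + 2)] ++ comp r
  | FOr q r => comp q ++ [IJump (length (comp r) + 2); IJump 1] ++ comp r
  end.

Lemma run_S X n f pc s :
  1 <= pc <= length X ->
  run X n (S f) pc s =
    match nth (pc - 1) X ITerm with
    | ITerm => Some (Terminated s)
    | IJump 0 => Some Deadlock
    | IJump l => run X n f (pc + l) s
    | IPlain a => if forbidden n a then Some Violation else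
        let (s', _) := exec_basic a s in run X n f (pc + 1) s'
    | IPos a => if forbidden n a then Some Violation else
        let (s', r) := exec_basic a s in
        run X n f (if r then pc + 1 else pc + 2) s'
    | INeg a => if forbidden n a then Some Violation else
        let (s', r) := exec_basic a s in
        run X n f (if r then pc + 2 else pc + 1) s'
    end.
Proof.
  intros [H1 H2]. cbn [run].
  replace (pc =? 0) with false by (symmetry; apply Nat.eqb_neq; lia).
  replace (length X <? pc) with false by (symmetry; apply Nat.ltb_ge; lia).
  reflexivity.
Qed.

Lemma nth_mid (pre C post : list instr) j d :
  j < length C -> nth (length pre + 1 + j - 1) (pre ++ C ++ post) d = nth j C d.
Proof.
  intros Hj. replace (length pre + 1 + j - 1) with (length pre + j) by lia.
  rewrite app_nth2 by lia. replace (length pre + j - length pre) with j by lia.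
  apply app_nth1; auto.
Qed.

Lemma len_mid (pre C post : list instr) j :
  j < length C -> 1 <= length pre + 1 + j <= length (pre ++ C ++ post).
Proof. intros; rewrite !length_app; lia. Qed.

Lemma seg_ok n s v (Hs : forall i, 1 <= i <= n -> s (FIn i) = v i) :
  forall phi, vars_among n phi -> forall pre post, exists k, forall f,
    run (pre ++ comp phi ++ post) n (k + f) (length pre + 1) s =
    run (pre ++ comp phi ++ post) n f
      (length pre + 1 + length (comp phi) + (if feval v phi then 0 else 1)) s.
Proof.
  induction phi as [i|q IHq|q IHq r IHr|q IHq r IHr]; cbn [comp feval vars_among]; intros Hv pre post.
  - exists 1. intros f. change (1 + f) with (S f).
    pose proof (len_mid pre [IPos (BI (FIn i) MGet)] post 0 ltac:(simpl; lia)) as HL.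
    rewrite Nat.add_0_r in HL.
    rewrite run_S by exact HL.
    replace (length pre + 1 - 1) with (length pre) by lia.
    rewrite app_nth2 by lia. rewrite Nat.sub_diag. cbn [nth].
    unfold forbidden; simpl.
    replace (n <? i) with false by (symmetry; apply Nat.ltb_ge; lia).
    unfold exec_basic; simpl. rewrite Hs by lia.
    destruct (v i); f_equal; lia.
  - destruct (IHq Hv pre ([IJump 3; IJump 1] ++ post)) as [k Hk].
    exists (k + 1). intros f.
    rewrite <- app_assoc.
    replace (k + 1 + f) with (k + S f) by lia. rewrite Hk.
    set (X := pre ++ comp q ++ [IJump 3; IJump 1] ++ post).
    assert (E : X = pre ++ (comp q ++ [IJump 3; IJump 1]) ++ post)
      by (unfold X; rewrite <- app_assoc; reflexivity).
    rewrite length_app; cbn [length].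
    destruct (feval v q); cbn [negb].
    + rewrite Nat.add_0_r. rewrite run_S.
      2:{ rewrite E. apply (len_mid pre _ post (length (comp q))); rewrite length_app; simpl; lia. }
      rewrite E.
      rewrite (nth_mid pre _ post (length (comp q))) by (rewrite length_app; simpl; lia).
      rewrite app_nth2 by lia. rewrite Nat.sub_diag. simpl. f_equal; lia.
    + replace (length pre + 1 + length (comp q) + 1) with (length pre + 1 + (length (comp q) + 1)) by lia. rewrite run_S.
      2:{ rewrite E. apply (len_mid pre _ post (length (comp q) + 1)); rewrite length_app; simpl; lia. }
      rewrite E.
      rewrite (nth_mid pre _ post (length (comp q) + 1)) by (rewrite length_app; simpl; lia).
      rewrite app_nth2 by lia. replace (length (comp q) + 1 - length (comp q)) with 1 by lia.
      simpl. f_equal; lia.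
  -
    destruct Hv as [Hq Hr].
    set (J := [IJump (length (comp r) + 2); IJump 1]).
    assert (E1 : pre ++ (comp q ++ J ++ comp r) ++ post = pre ++ comp q ++ (J ++ comp r ++ post))
      by (rewrite <- !app_assoc; reflexivity).
    assert (E2 : pre ++ (comp q ++ J ++ comp r) ++ post = (pre ++ comp q ++ J) ++ comp r ++ post)
      by (rewrite <- !app_assoc; reflexivity).
    destruct (IHq Hq pre (J ++ comp r ++ post)) as [kq Hkq].
    destruct (IHr Hr (pre ++ comp q ++ J) post) as [kr Hkr].
    rewrite !length_app. replace (length J) with 2 by reflexivity.
    destruct (feval v q) eqn:Eq; cbn [orb andb].
    + exists (kq + 1). intros f.
      replace (kq + 1 + f) with (kq + S f) by lia. rewrite E1, Hkq.
      rewrite run_S by (rewrite !length_app; unfold J; cbn [length]; lia).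
      replace (length pre + 1 + length (comp q) + 0 - 1) with (length pre + (length (comp q) + 0)) by lia.
      rewrite !app_nth2_plus. unfold J. cbn [nth app].
      replace (length (comp r) + 2) with (S (S (length (comp r)))) by lia.
      simpl. f_equal. lia.
    + exists (kq + 1 + kr). intros f.
      replace (kq + 1 + kr + f) with (kq + S (kr + f)) by lia. rewrite E1, Hkq.
      rewrite run_S by (rewrite !length_app; unfold J; cbn [length]; lia).
      replace (length pre + 1 + length (comp q) + 1 - 1) with (length pre + (length (comp q) + 1)) by lia.
      rewrite !app_nth2_plus.
      replace (nth 1 (J ++ comp r ++ post) ITerm) with (IJump 1) by reflexivity.
      rewrite <- E1, E2.
      replace (length pre + 1 + length (comp q) + 1 + 1) with (length (pre ++ comp q ++ J) + 1)
        by (rewrite !length_app; unfold J; simpl; lia).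
      rewrite Hkr. f_equal. rewrite !length_app; unfold J; simpl. lia.
  -
    destruct Hv as [Hq Hr].
    set (J := [IJump 2; IJump (length (comp r) + 2)]).
    assert (E1 : pre ++ (comp q ++ J ++ comp r) ++ post = pre ++ comp q ++ (J ++ comp r ++ post))
      by (rewrite <- !app_assoc; reflexivity).
    assert (E2 : pre ++ (comp q ++ J ++ comp r) ++ post = (pre ++ comp q ++ J) ++ comp r ++ post)
      by (rewrite <- !app_assoc; reflexivity).
    destruct (IHq Hq pre (J ++ comp r ++ post)) as [kq Hkq].
    destruct (IHr Hr (pre ++ comp q ++ J) post) as [kr Hkr].
    rewrite !length_app. replace (length J) with 2 by reflexivity.
    destruct (feval v q) eqn:Eq; cbn [orb andb].
    + exists (kq + 1 + kr). intros f.
      replace (kq + 1 + kr + f) with (kq + S (kr + f)) by lia. rewrite E1, Hkq.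
      rewrite run_S by (rewrite !length_app; unfold J; cbn [length]; lia).
      replace (length pre + 1 + length (comp q) + 0 - 1) with (length pre + (length (comp q) + 0)) by lia.
      rewrite !app_nth2_plus.
      replace (nth 0 (J ++ comp r ++ post) ITerm) with (IJump 2) by reflexivity.
      rewrite <- E1, E2.
      replace (length pre + 1 + length (comp q) + 0 + 2) with (length (pre ++ comp q ++ J) + 1)
        by (rewrite !length_app; unfold J; simpl; lia).
      rewrite Hkr. f_equal. rewrite !length_app; unfold J; simpl. lia.
    + exists (kq + 1). intros f.
      replace (kq + 1 + f) with (kq + S f) by lia. rewrite E1, Hkq.
      rewrite run_S by (rewrite !length_app; unfold J; cbn [length]; lia).
      replace (length pre + 1 + length (comp q) + 1 - 1) with (length pre + (length (comp q) + 1)) by lia.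
      rewrite !app_nth2_plus. unfold J. cbn [nth app].
      replace (length (comp r) + 2) with (S (S (length (comp r)))) by lia.
      simpl. f_equal. lia.
Qed.

Lemma comp_instrs n : forall phi, vars_among n phi -> forall u, In u (comp phi) ->
  (exists l, u = IJump l) \/ (exists i, 1 <= i /\ u = IPos (BI (FIn i) MGet)).
Proof.
  induction phi as [i|q IHq|q IHq r IHr|q IHq r IHr]; cbn [comp vars_among]; intros Hv u Hu.
  - destruct Hu as [<-|[]]. right. exists i. split; [lia|reflexivity].
  - apply in_app_iff in Hu. destruct Hu as [H|H]; [eauto|].
    left. destruct H as [<-|[<-|[]]]; eauto.
  - destruct Hv as [Hq Hr]. apply in_app_iff in Hu. destruct Hu as [H|H]; [eauto|].
    apply in_app_iff in H. destruct H as [H|H]; [|eauto].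
    left. destruct H as [<-|[<-|[]]]; eauto.
  - destruct Hv as [Hq Hr]. apply in_app_iff in Hu. destruct Hu as [H|H]; [eauto|].
    apply in_app_iff in H. destruct H as [H|H]; [|eauto].
    left. destruct H as [<-|[<-|[]]]; eauto.
Qed.

Lemma comp_len : forall phi, length (comp phi) <= 3 * fsize phi.
Proof.
  induction phi; cbn [comp fsize]; rewrite ?length_app; cbn [length]; lia.
Qed.

Theorem theorem2 :
  exists c : nat,
    forall (n : nat) (phi : formula),
      vars_among n phi ->
      exists X : list instr,
        IS_na_br X /\ no_out_setF X /\
        computes X n (induced phi) /\
        length X <= c * (fsize phi + 1).
Proof.
  exists 3. intros n phi Hv.
  exists (comp phi ++ [IPlain (BI FOut (MSet true)); ITerm]).
  split; [|split; [|split]].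
  - split.
    + intro H. apply (f_equal (@length instr)) in H. rewrite length_app in H. simpl in H. lia.
    + intros u a Hu Ha. apply in_app_iff in Hu. destruct Hu as [Hu|Hu].
      * destruct (comp_instrs n phi Hv u Hu) as [[l ->]|[i [Hi ->]]].
        -- destruct Ha.
        -- destruct Ha as [<-|[]]. simpl. exact Hi.
      * destruct Hu as [<-|[<-|[]]]; simpl in Ha; [destruct Ha as [<-|[]]; cbv; auto | destruct Ha].
  - intros u Hu Ha. apply in_app_iff in Hu. destruct Hu as [Hu|Hu].
    + destruct (comp_instrs n phi Hv u Hu) as [[l ->]|[i [Hi ->]]].
      * destruct Ha.
      * destruct Ha as [H|[]]. discriminate.
    + destruct Hu as [<-|[<-|[]]]; simpl in Ha; [destruct Ha as [H|[]]; discriminate | destruct Ha].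
  - intros bs Hbs.
    set (s := init_state bs).
    set (v := fun j => nth (j - 1) bs false).
    assert (Hs : forall i, 1 <= i <= n -> s (FIn i) = v i).
    { intros i Hi. unfold s, init_state, v.
      replace ((1 <=? i) && (i <=? length bs)) with true; [reflexivity|].
      symmetry. apply andb_true_iff. split; apply Nat.leb_le; lia. }
    destruct (seg_ok n s v Hs phi Hv [] [IPlain (BI FOut (MSet true)); ITerm]) as [k Hk].
    exists (k + 2).
    cbn [length] in Hk. rewrite Nat.add_0_l in Hk. rewrite app_nil_l in Hk.
    rewrite Hk. unfold induced. fold v.
    set (X := comp phi ++ [IPlain (BI FOut (MSet true)); ITerm]).
    assert (HL : length X = length (comp phi) + 2) by (unfold X; rewrite length_app; reflexivity).
    destruct (feval v phi).
    + rewrite run_S by lia.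
      match goal with |- context [nth ?p X ITerm] => replace p with (length (comp phi) + 0) by lia end.
      unfold X at 1. rewrite app_nth2_plus. cbn [nth].
      unfold forbidden, exec_basic; cbn [bfocus bmethod].
      rewrite run_S by lia.
      match goal with |- context [nth ?p X ITerm] => replace p with (length (comp phi) + 1) by lia end.
      unfold X at 1. rewrite app_nth2_plus. cbn [nth].
      eexists. split; [reflexivity|]. reflexivity.
    + rewrite run_S by lia.
      match goal with |- context [nth ?p X ITerm] => replace p with (length (comp phi) + 1) by lia end.
      unfold X at 1. rewrite app_nth2_plus. cbn [nth].
      eexists. split; [reflexivity|]. reflexivity.
  - rewrite length_app. pose proof (comp_len phi). simpl. lia.
Qed.
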